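(* Let $\vec p,\vec s$ be $n$-tuples with entries in $[1,\infty]$ and let $\alpha$ satisfy $0\le\frac1n\sum_{i=1}^n\frac1{s_i}\le\frac1\alpha\le\frac1n\sum_{i=1}^n\frac1{p_i}<1$. Then there is a constant $C>0$ such that for every ball $B(x_0,r_0)\subset\mathbb R^n$, $$\|\chi_{B(x_0,r_0)}\|_{(L^{\vec p},L^{\vec s})^{\alpha}}\le C\,r_0^{n/\alpha}\quad\text{and}\quad\|\chi_{B(x_0,r_0)}\|_{\mathcal H(\vec p\,',\vec s\,',\alpha')}\le C\,r_0^{n/\alpha'}.$$
   Context: For $\vec p=(p_1,\dots,p_n)$, $\|f\|_{L^{\vec p}}=\Big(\int_{\mathbb R}\cdots\Big(\int_{\mathbb R}|f(x)|^{p_1}\,dx_1\Big)^{p_2/p_1}\cdots dx_n\Big)^{1/p_n}$ (usual modification when some exponent is $\infty$); primes denote conjugate exponents ($1/p_i+1/p_i'=1$, $1/\alpha+1/\alpha'=1$). $B(y,r)$ is the open ball of center $y$, radius $r$, $\chi_E$ the characteristic function of $E$. $\|f\|_{(L^{\vec p},L^{\vec s})^{\alpha}}:=\sup_{r>0}\Big\|\,y\mapsto |B(y,r)|^{\frac1\alpha-\frac1n\sum_{i}\frac1{p_i}-\frac1n\sum_{i}\frac1{s_i}}\|f\chi_{B(y,r)}\|_{L^{\vec p}}\Big\|_{L^{\vec s}}$ (outer norm in $y$). For $k\in\mathbb Z^n$ let $Q_{1,k}=k+[0,1)^n$, $\|\{a_k\}\|_{\ell^{\vec s}}=\Big(\sum_{k_n}\cdots\Big(\sum_{k_1}|a_k|^{s_1}\Big)^{s_2/s_1}\cdots\Big)^{1/s_n}$,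 and $\|f\|_{\vec p\,',\vec s\,'}=\big\|\{\|f\chi_{Q_{1,k}}\|_{L^{\vec p\,'}}\}_k\big\|_{\ell^{\vec s\,'}}$; $(L^{\vec p\,'},\ell^{\vec s\,'})(\mathbb R^n)$ is the set of $f\in L^1_{loc}$ with $\|f\|_{\vec p\,',\vec s\,'}<\infty$. For $r>0$, $St^{(\alpha')}_rf(x)=r^{-n/\alpha'}f(x/r)$. $\mathcal H(\vec p\,',\vec s\,',\alpha')$ is the set of $f\in L^1_{loc}(\mathbb R^n)$ admitting a sequence $\{(c_j,r_j,f_j)\}_{j\ge1}\subset\mathbb C\times(0,\infty)\times(L^{\vec p\,'},\ell^{\vec s\,'})(\mathbb R^n)$ with $f=\sum_jc_jSt^{(\alpha')}_{r_j}(f_j)$ in $L^1_{loc}$, $\|f_j\|_{\vec p\,',\vec s\,'}\le1$, and $\sum_j|c_j|<\infty$; $\|f\|_{\mathcal H(\vec p\,',\vec s\,',\alpha')}$ is the infimum of $\sum_j|c_j|$ over all such sequences. *)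

(* Defs.v *)
From HB Require Import structures.
From mathcomp Require Import all_boot all_order all_algebra.
From mathcomp Require Import all_classical all_reals all_analysis.
From mathcomp Require Import ess_sup_inf complex.

Set Implicit Arguments.
Unset Strict Implicit.
Unset Printing Implicit Defensive.

Import Order.TTheory GRing.Theory Num.Theory.
Import numFieldNormedType.Exports.

Local Open Scope classical_set_scope.
Local Open Scope ring_scope.

Section MixedNorms.
Variable R : realType.

Definition Rn (n : nat) := 'I_n -> R.
Definition Zn (n : nat) := 'I_n -> int.

Definition cabs (z : R[i]) : R := Normc.normc z.

Definition inv_exp (p : \bar R) : R :=
  match p with (r%:E)%E => r^-1 | _ => 0 end.

Definition conj_exp (p : \bar R) : \bar R :=
  match p with
  | (r%:E)%E => if r == 1 then (+oo)%E else ((r / (r - 1))%:E)%E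
  | (+oo)%E => 1%E
  | (-oo)%E => (-oo)%E
  end.

(* k-th exponent of a vector of exponents (k < n; junk value 1 otherwise) *)
Definition exp_at n (p : 'I_n -> \bar R) (k : nat) : \bar R :=
  match (insub k : option 'I_n) with Some i => p i | None => 1%E end.

Definition upd n (T : Type) (x : 'I_n -> T) (k : nat) (t : T) : 'I_n -> T :=
  fun i => if val i == k then t else x i.

Definition Lp1 (p : \bar R) (g : R -> \bar R) : \bar R :=
  match p with
  | (+oo)%E => ess_sup (@lebesgue_measure R) g
  | _ => ((\int[@lebesgue_measure R]_(t in setT) (poweR (g t) (fine p)))
           `^ (fine p)^-1)%E
  end.

Definition lp1 (p : \bar R) (a : int -> \bar R) : \bar R :=
  match p with
  | (+oo)%E => ereal_sup (range a)
  | _ => ((\esum_(k in [set: int]) (poweR (a k) (fine p))) `^ (fine p)^-1)%E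
  end.

(* iterated norm: after step k, variables x_0..x_{k-1} have been normed
   (innermost first, i.e. x_1 with p_1 in the paper's indexing). *)
Fixpoint iter_norm n (T : Type) (agg : \bar R -> (T -> \bar R) -> \bar R)
    (p : 'I_n -> \bar R) (g : ('I_n -> T) -> \bar R) (k : nat)
    : ('I_n -> T) -> \bar R :=
  match k with
  | 0%N => g
  | k'.+1 => fun x =>
      agg (exp_at p k') (fun t => iter_norm agg p g k' (upd x k' t))
  end.

Definition mixedL n (p : 'I_n -> \bar R) (g : Rn n -> \bar R) : \bar R :=
  iter_norm Lp1 p g n (fun=> 0).

Definition mixedl n (s : 'I_n -> \bar R) (a : Zn n -> \bar R) : \bar R :=
  iter_norm lp1 s a n (fun=> 0).

Definition eball n (y : Rn n) (r : R) : set (Rn n) :=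
  [set x | \sum_(i < n) (x i - y i) ^+ 2 < r ^+ 2].

(* n-dimensional Lebesgue measure of a set (iterated integral of its
   indicator, Tonelli) *)
Definition vol n (A : set (Rn n)) : \bar R :=
  @mixedL n (fun=> 1%E) (fun x => (\1_A x)%:E).

Definition normL_on n (p : 'I_n -> \bar R) (f : Rn n -> R[i]) (A : set (Rn n)) :=
  mixedL p (fun x => (cabs (f x) * \1_A x)%:E).

Definition morrey_norm n (p s : 'I_n -> \bar R) (alpha : \bar R)
    (f : Rn n -> R[i]) : \bar R :=
  let e := inv_exp alpha - (\sum_(i < n) inv_exp (p i)) / n%:R
                         - (\sum_(i < n) inv_exp (s i)) / n%:R in
  ereal_sup [set mixedL s (fun y =>
                  (poweR (vol (eball y r)) e * normL_on p f (eball y r))%E)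
            | r in [set r : R | 0 < r]].

Definition cube n (k : Zn n) : set (Rn n) :=
  [set x | forall i, (k i)%:~R <= x i < (k i)%:~R + 1].

Definition amalgam_norm n (p s : 'I_n -> \bar R) (f : Rn n -> R[i]) : \bar R :=
  mixedl s (fun k => normL_on p f (cube k)).

Definition boxes n : set (set (Rn n)) :=
  [set A | exists a b : Rn n, A = [set x | forall i, a i < x i < b i]].
Definition borel_Rn n (A : set (Rn n)) : Prop := <<s @boxes n >> A.
Definition measurable_Rn n (g : Rn n -> R) : Prop :=
  forall B : set R, measurable B -> borel_Rn (g @^-1` B).

Definition L1loc n (f : Rn n -> R[i]) : Prop :=
  [/\ measurable_Rn (fun x => complex.Re (f x)),
      measurable_Rn (fun x => complex.Im (f x)) &
      forall rho : R, 0 < rho -> (normL_on (fun=> 1%E) f (eball (fun=> 0%R) rho) < +oo)%E].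

Definition amalgam_space n (p s : 'I_n -> \bar R) (f : Rn n -> R[i]) : Prop :=
  L1loc f /\ (amalgam_norm p s f < +oo)%E.

Definition St n (beta : \bar R) (r : R) (f : Rn n -> R[i]) : Rn n -> R[i] :=
  fun x => ((r `^ (- (n%:R * inv_exp beta)))%:C)%C * f (fun i => x i / r).

Definition cvg_L1loc n (S : nat -> Rn n -> R[i]) (f : Rn n -> R[i]) : Prop :=
  forall rho : R, 0 < rho ->
    (fun N => normL_on (fun=> 1%E) (fun x => f x - S N x) (eball (fun=> 0%R) rho))
      @ \oo --> 0%E.

(* admissible decompositions for H(p', s', alpha') with
   (p', s', alpha') = (q, t, beta) *)
Definition H_decomp n (q t : 'I_n -> \bar R) (beta : \bar R)
    (f : Rn n -> R[i]) (c : nat -> R[i]) (r : nat -> R)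
    (fs : nat -> Rn n -> R[i]) : Prop :=
  [/\ forall j, 0 < r j,
      forall j, amalgam_space q t (fs j),
      forall j, (amalgam_norm q t (fs j) <= 1)%E,
      (\sum_(j <oo) (cabs (c j))%:E < +oo)%E &
      cvg_L1loc (fun N x => \sum_(j < N) c j * St beta (r j) (fs j) x) f].

Definition H_norm n (q t : 'I_n -> \bar R) (beta : \bar R)
    (f : Rn n -> R[i]) : \bar R :=
  ereal_inf [set S | exists c r fs,
     H_decomp q t beta f c r fs /\ S = (\sum_(j <oo) (cabs (c j))%:E)%E].

Definition chiC n (A : set (Rn n)) : Rn n -> R[i] :=
  fun x => ((\1_A x : R)%:C)%C.

End MixedNorms.

(* Main.v *)
Require Import Defs.
From HB Require Import structures.
From mathcomp Require Import all_boot all_order all_algebra.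
From mathcomp Require Import all_classical all_reals all_analysis.
From mathcomp Require Import ess_sup_inf complex.
From mathcomp Require Import ring lra zify measurable_realfun.
Import Order.TTheory GRing.Theory Num.Theory.
Import numFieldNormedType.Exports.
Local Open Scope classical_set_scope.
Local Open Scope ring_scope.

Section Gen.
Variable R : realType.
Local Open Scope ereal_scope.
Notation mu := (@lebesgue_measure R).

Lemma indic_iff (T : Type) (A : set T) (P : Prop) x : (A x <-> P) ->
  \1_A x = (if pselect P then 1 else 0 : R)%R.
Proof.
move=> h; case: pselect => HP; rewrite indicE.
  by rewrite mem_set //; apply/h.
by rewrite memNset //; move/h.
Qed.

Lemma iter_ge0 n (T : Type) (agg : \bar R -> (T -> \bar R) -> \bar R)
  (p : 'I_n -> \bar R) (g : ('I_n -> T) -> \bar R) :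
  (forall q f, (forall t, 0 <= f t) -> 0 <= agg q f) ->
  (forall x, 0 <= g x) -> forall k x, 0 <= iter_norm agg p g k x.
Proof.
move=> hagg g0; elim=> [|k IH] x //=; exact: hagg.
Qed.

Lemma exp_atE n (p : 'I_n -> \bar R) (i : 'I_n) : exp_at p i = p i.
Proof. by rewrite /exp_at valK. Qed.

Lemma iter_box_up n (T : Type) (agg : \bar R -> (T -> \bar R) -> \bar R)
  (p : 'I_n -> \bar R) (g : ('I_n -> T) -> \bar R)
  (I : 'I_n -> set T) (M : 'I_n -> R) (K : R) :
  (forall q f, (forall t, 0 <= f t) -> 0 <= agg q f) ->
  (forall i f h, (forall t, 0 <= f t) -> (forall t, f t <= h t) ->
     agg (p i) f <= agg (p i) h) ->
  (forall i c, (0 <= c)%R -> agg (p i) (fun t => (c * \1_(I i) t)%:E) <= (c * M i)%:E) ->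
  (forall i, (0 <= M i)%R) -> (0 <= K)%R ->
  (forall x, 0 <= g x) ->
  (forall x, g x <= (K * \1_[set x | forall i, I i (x i)] x)%:E) ->
  forall k, (k <= n)%N -> forall x,
  iter_norm agg p g k x <=
    (K * (\prod_(i < n | (i < k)%N) M i) *
      \1_[set x | forall i : 'I_n, (k <= i)%N -> I i (x i)] x)%:E.
Proof.
move=> hge0 hmono hbox M0 K0 g0 gK; elim=> [|k IH] kn x /=.
  rewrite big_pred0 // mulr1; apply: le_trans (gK x) _; rewrite lee_fin.
  have -> : [set x | forall i : 'I_n, (0 <= i)%N -> I i (x i)] = [set x | forall i, I i (x i)].
    by apply/seteqP; split=> y h i //; apply: h.
  by [].
have lek : (k <= n)%N := ltnW kn.
pose o := Ordinal kn.
have -> : exp_at p k = p o by rewrite -(exp_atE _ p o).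
pose c := (K * \prod_(i < n | (i < k)%N) M i *
   \1_[set x | forall i : 'I_n, (k.+1 <= i)%N -> I i (x i)] x)%R.
have P0 : (0 <= \prod_(i < n | (i < k)%N) M i)%R by apply: prodr_ge0.
have c0 : (0 <= c)%R by rewrite /c !mulr_ge0.
apply: le_trans (hmono o _ (fun t => (c * \1_(I o) t)%:E) _ _) _.
- by move=> t; apply: iter_ge0.
- move=> t; apply: le_trans (IH lek _) _; rewrite lee_fin /c -!mulrA.
  apply: ler_wpM2l => //; apply: ler_wpM2l => //.
  rewrite (@indic_iff _ _ ((forall i : 'I_n, (k.+1 <= i)%N -> I i (x i)) /\ I o t)); last first.
    split=> [h|[h1 h2] i ki].
      split; last by have := h o (leqnn k); rewrite /upd /= eqxx.
      move=> i ki; have := h i (ltnW ki); rewrite /upd; case: eqP => // ik.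
      by move: ki; rewrite ik ltnn.
    rewrite /upd; case: eqP => [ik|ik]; first by have -> : i = o by apply/val_inj.
    by apply: h1; rewrite ltn_neqAle ki andbT; apply/eqP => /esym.
  rewrite (@indic_iff _ _ (forall i : 'I_n, (k.+1 <= i)%N -> I i (x i))) //.
  rewrite (@indic_iff _ _ (I o t)) //.
  case: (pselect (forall i : 'I_n, (k.+1 <= i)%N -> I i (x i))) => h1;
  case: (pselect (I o t)) => h2;
  case: (pselect ((forall i : 'I_n, (k.+1 <= i)%N -> I i (x i)) /\ I o t)) => h3 /=;
  rewrite ?mulr1 ?mulr0 ?mul0r //; exfalso; tauto.
- apply: le_trans (hbox o c c0) _; rewrite lee_fin /c.
  have -> : (\prod_(i < n | (i < k.+1)%N) M i = M o * \prod_(i < n | (i < k)%N) M i)%R.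
    rewrite (bigD1 o) //=; f_equal; apply: eq_bigl => i.
    rewrite ltnS; apply/andP/idP => [[h1 h2]|h].
      by rewrite ltn_neqAle h1 andbT; apply: contra h2 => /eqP ik; apply/eqP/val_inj.
    split; first exact: ltnW.
    by apply/eqP => io; move: h; rewrite io ltnn.
  by rewrite le_eqVlt; apply/orP; left; apply/eqP; ring.
Qed.
Lemma iter_box_lo n (T : Type) (agg : \bar R -> (T -> \bar R) -> \bar R)
  (p : 'I_n -> \bar R) (g : ('I_n -> T) -> \bar R)
  (I : 'I_n -> set T) (M : 'I_n -> R) (K : R) :
  (forall q f, (forall t, 0 <= f t) -> 0 <= agg q f) ->
  (forall i f h, (forall t, 0 <= f t) -> (forall t, f t <= h t) ->
     agg (p i) f <= agg (p i) h) ->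
  (forall i c, (0 <= c)%R -> (c * M i)%:E <= agg (p i) (fun t => (c * \1_(I i) t)%:E)) ->
  (forall i, (0 <= M i)%R) -> (0 <= K)%R ->
  (forall x, 0 <= g x) ->
  (forall x, (K * \1_[set x | forall i, I i (x i)] x)%:E <= g x) ->
  forall k, (k <= n)%N -> forall x,
    (K * (\prod_(i < n | (i < k)%N) M i) *
      \1_[set x | forall i : 'I_n, (k <= i)%N -> I i (x i)] x)%:E <=
  iter_norm agg p g k x.
Proof.
move=> hge0 hmono hbox M0 K0 g0 gK; elim=> [|k IH] kn x /=.
  rewrite big_pred0 // mulr1; apply: le_trans (gK x); rewrite lee_fin.
  have -> : [set x | forall i : 'I_n, (0 <= i)%N -> I i (x i)] = [set x | forall i, I i (x i)].
    by apply/seteqP; split=> y h i //; apply: h.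
  by [].
have lek : (k <= n)%N := ltnW kn.
pose o := Ordinal kn.
have -> : exp_at p k = p o by rewrite -(exp_atE _ p o).
pose c := (K * \prod_(i < n | (i < k)%N) M i *
   \1_[set x | forall i : 'I_n, (k.+1 <= i)%N -> I i (x i)] x)%R.
have P0 : (0 <= \prod_(i < n | (i < k)%N) M i)%R by apply: prodr_ge0.
have c0 : (0 <= c)%R by rewrite /c !mulr_ge0.
have hF : forall t, (0 <= (c * \1_(I o) t)%:E).
  by move=> t; rewrite lee_fin mulr_ge0.
have hFi : forall t, (c * \1_(I o) t)%:E <= iter_norm agg p g k (upd x k t).
  move=> t; apply: le_trans (IH lek _); rewrite lee_fin /c -!mulrA.
  apply: ler_wpM2l => //; apply: ler_wpM2l => //.
  rewrite (@indic_iff _ _ ((forall i : 'I_n, (k.+1 <= i)%N -> I i (x i)) /\ I o t) (upd x k t)); last first.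
    split=> [h|[h1 h2] i ki].
      split; last by have := h o (leqnn k); rewrite /upd /= eqxx.
      move=> i ki; have := h i (ltnW ki); rewrite /upd; case: eqP => // ik.
      by move: ki; rewrite ik ltnn.
    rewrite /upd; case: eqP => [ik|ik]; first by have -> : i = o by apply/val_inj.
    by apply: h1; rewrite ltn_neqAle ki andbT; apply/eqP => /esym.
  rewrite (@indic_iff _ _ (forall i : 'I_n, (k.+1 <= i)%N -> I i (x i)) x) //.
  rewrite (@indic_iff _ _ (I o t) t) //.
  case: (pselect (forall i : 'I_n, (k.+1 <= i)%N -> I i (x i))) => h1;
  case: (pselect (I o t)) => h2;
  case: (pselect ((forall i : 'I_n, (k.+1 <= i)%N -> I i (x i)) /\ I o t)) => h3 /=;
  rewrite ?mulr1 ?mulr0 ?mul0r //; exfalso; tauto.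
apply: le_trans (hmono o _ _ hF hFi).
apply: le_trans (hbox o c c0); rewrite lee_fin /c.
have -> : (\prod_(i < n | (i < k.+1)%N) M i = M o * \prod_(i < n | (i < k)%N) M i)%R.
  rewrite (bigD1 o) //=; f_equal; apply: eq_bigl => i.
  rewrite ltnS; apply/andP/idP => [[h1 h2]|h].
    by rewrite ltn_neqAle h1 andbT; apply: contra h2 => /eqP ik; apply/eqP/val_inj.
  split; first exact: ltnW.
  by apply/eqP => io; move: h; rewrite io ltnn.
by rewrite le_eqVlt; apply/orP; left; apply/eqP; ring.
Qed.

Lemma lebT : 0 < mu [set: R].
Proof. by rewrite -set_itvNyy lebesgue_measure_itv /= ltry. Qed.

Lemma int_mono (f g : R -> \bar R) : (forall t, 0 <= f t) ->
  (forall t, f t <= g t) ->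
  \int[mu]_(t in setT) f t <= \int[mu]_(t in setT) g t.
Proof.
move=> f0 fg; have g0 t : 0 <= g t by apply: le_trans (fg t).
rewrite !ge0_integralTE//; apply: ereal_sup_le => _ [h hf <-].
by exists h => //= x; exact: le_trans (hf x) (fg x).
Qed.

Lemma Lp1_ge0 q (f : R -> \bar R) : (forall t, 0 <= f t) -> 0 <= Lp1 q f.
Proof.
case: q => [r| |] f0 /=; try exact: poweR_ge0.
by apply: ess_sup_gee; [exact: lebT | apply: aeW].
Qed.

Lemma Lp1_mono p (f g : R -> \bar R) : 1 <= p -> (forall t, 0 <= f t) ->
  (forall t, f t <= g t) -> Lp1 p f <= Lp1 p g.
Proof.
case: p => [r| |] //= p1 f0 fg.
  have r1 : (1 <= r)%R by rewrite -lee_fin.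
  have r0 : (0 <= r)%R by apply: le_trans r1.
  apply: gt0_ler_poweR; first by rewrite invr_ge0.
  - by rewrite in_itv /= leey andbT; apply: integral_ge0 => t _; exact: poweR_ge0.
  - by rewrite in_itv /= leey andbT; apply: integral_ge0 => t _; exact: poweR_ge0.
  apply: int_mono => t; first exact: poweR_ge0.
  apply: gt0_ler_poweR => //; rewrite in_itv /= leey andbT //.
  exact: le_trans (fg t).
by apply: le_ess_sup; apply: aeW.
Qed.

Lemma Lp1_box_eq (r c L : R) (I : set R) : (1 <= r)%R -> (0 <= c)%R ->
  measurable I -> mu I = L%:E ->
  Lp1 r%:E (fun t => (c * \1_I t)%:E) = (c * L `^ r^-1)%:E.
Proof.
move=> r1 c0 mI muI /=.
have r0 : (0 < r)%R by apply: lt_le_trans r1.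
have L0 : (0 <= L)%R by rewrite -lee_fin -muI measure_ge0.
have -> : (fun t => ((c * \1_I t) `^ r)%:E) = (fun t => (c `^ r)%:E * (\1_I t)%:E).
  apply/funext => t; rewrite -EFinM; congr EFin.
  rewrite indicE; case: (t \in I); rewrite ?mulr1 ?mulr0 ?powR0 //.
  by rewrite gt_eqF.
rewrite ge0_integralZl_EFin ?powR_ge0 //; last first.
  apply/measurable_EFinP. apply: measurable_indic. exact: mI.
have -> : \int[mu]_x (\1_I x)%:E = L%:E.
  by rewrite integral_indic // setIT; exact: muI.
rewrite -EFinM poweR_EFin powRM ?powR_ge0 //.
by rewrite -powRrM mulfV ?gt_eqF // powRr1.
Qed.

Lemma Lp1_box_up (p : \bar R) (c L : R) (I : set R) : 1 <= p -> (0 <= c)%R ->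
  measurable I -> mu I = L%:E ->
  Lp1 p (fun t => (c * \1_I t)%:E) <= (c * L `^ inv_exp p)%:E.
Proof.
case: p => [r| |] //= p1 c0 mI muI.
  have r1 : (1 <= r)%R by rewrite -lee_fin.
  by have := @Lp1_box_eq r c L I r1 c0 mI muI => /= ->.
rewrite powRr0 mulr1; apply/ess_supP; apply: aeW => t.
by rewrite lee_fin indicE; case: (t \in I); rewrite ?mulr1 ?mulr0.
Qed.

Lemma lp1_ge0 q (f : int -> \bar R) : (forall t, 0 <= f t) -> 0 <= lp1 q f.
Proof.
case: q => [r| |] f0 /=; try exact: poweR_ge0.
by apply: le_trans (f0 0%R) _; apply: ereal_sup_ubound; exists 0%R.
Qed.

Lemma lp1_mono p (f g : int -> \bar R) : 1 <= p -> (forall t, 0 <= f t) ->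
  (forall t, f t <= g t) -> lp1 p f <= lp1 p g.
Proof.
case: p => [r| |] //= p1 f0 fg.
  have r1 : (1 <= r)%R by rewrite -lee_fin.
  have r0 : (0 <= r)%R by apply: le_trans r1.
  apply: gt0_ler_poweR; first by rewrite invr_ge0.
  - by rewrite in_itv /= leey andbT; apply: esum_ge0 => t _; exact: poweR_ge0.
  - by rewrite in_itv /= leey andbT; apply: esum_ge0 => t _; exact: poweR_ge0.
  apply: le_esum => t _.
  apply: gt0_ler_poweR => //; rewrite in_itv /= leey andbT //.
  exact: le_trans (fg t).
apply: ge_ereal_sup => _ [k _ <-]; apply: le_trans (fg k) _.
by apply: ereal_sup_ubound; exists k.
Qed.

Lemma esum_pt (d : R) (a : int) : (0 <= d)%R ->
  \esum_(k in [set: int]) (d * \1_[set a] k)%:E = d%:E.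
Proof.
move=> d0; rewrite (eq_esum (b := fun k => if k \in [set a] then d%:E else 0)).
  by rewrite -esum_mkcond esum_set1.
by move=> k _; rewrite indicE; case: (k \in _); rewrite ?mulr1 ?mulr0.
Qed.

Lemma lp1_box_up (q : \bar R) (c : R) (J : set int) (a1 a2 a3 : int) :
  1 <= q -> (0 <= c)%R -> (forall k, J k -> k = a1 \/ k = a2 \/ k = a3) ->
  lp1 q (fun k => (c * \1_J k)%:E) <= (c * 3)%:E.
Proof.
move=> q1 c0 hJ.
have i01 k : (\1_J k = 0%R :> R) \/ ((\1_J k = 1%R :> R) /\ (k = a1 \/ k = a2 \/ k = a3)).
  rewrite indicE; case: (boolP (k \in J)) => h; [right|left] => //; split => //.
  by apply: hJ; rewrite -inE.
case: q q1 => [r| |] //= q1.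
  have r1 : (1 <= r)%R by rewrite -lee_fin.
  have r0 : (0 < r)%R by apply: lt_le_trans r1.
  have -> : (fun k => ((c * \1_J k) `^ r)%:E) = (fun k => (c `^ r * \1_J k)%:E).
    apply/funext => k; congr EFin; case: (i01 k) => [->|[-> _]];
      by rewrite ?mulr0 ?mulr1 ?powR0 ?gt_eqF.
  apply: (@le_trans _ _ ((c `^ r * 3)%:E `^ r^-1)).
    apply: gt0_ler_poweR; first by rewrite invr_ge0 ltW.
    - by rewrite in_itv /= leey andbT; apply: esum_ge0 => t _; rewrite lee_fin mulr_ge0 ?powR_ge0.
    - by rewrite in_itv /= leey andbT lee_fin mulr_ge0 ?powR_ge0.
    apply: (@le_trans _ _ (\esum_(k in [set: int]) ((c `^ r * \1_[set a1] k)%:E +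
        (c `^ r * \1_[set a2] k)%:E + (c `^ r * \1_[set a3] k)%:E))).
      apply: le_esum => k _; rewrite -!EFinD lee_fin.
      have cr : (0 <= c `^ r)%R by rewrite powR_ge0.
      have g1 : (0 <= c `^ r * \1_[set a1] k)%R by rewrite mulr_ge0.
      have g2 : (0 <= c `^ r * \1_[set a2] k)%R by rewrite mulr_ge0.
      have g3 : (0 <= c `^ r * \1_[set a3] k)%R by rewrite mulr_ge0.
      case: (i01 k) => [->|[-> [ka|[ka|ka]]]].
      + by rewrite mulr0 !addr_ge0.
      + have e : \1_[set a1] k = 1%R :> R by rewrite indicE mem_set.
        by move: g1 g2 g3; rewrite e !mulr1 => *; lra.
      + have e : \1_[set a2] k = 1%R :> R by rewrite indicE mem_set.
        by move: g1 g2 g3; rewrite e !mulr1 => *; lra.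
      + have e : \1_[set a3] k = 1%R :> R by rewrite indicE mem_set.
        by move: g1 g2 g3; rewrite e !mulr1 => *; lra.
    rewrite esumD; last 2 first.
    - by move=> k _; rewrite ?adde_ge0 ?lee_fin ?mulr_ge0 ?powR_ge0.
    - by move=> k _; rewrite ?adde_ge0 ?lee_fin ?mulr_ge0 ?powR_ge0.
    rewrite esumD; last 2 first.
    - by move=> k _; rewrite ?adde_ge0 ?lee_fin ?mulr_ge0 ?powR_ge0.
    - by move=> k _; rewrite ?adde_ge0 ?lee_fin ?mulr_ge0 ?powR_ge0.
    rewrite !esum_pt ?powR_ge0 // -!EFinD lee_fin.
    by rewrite le_eqVlt; apply/orP; left; apply/eqP; ring.
  rewrite poweR_EFin lee_fin powRM ?powR_ge0 // -powRrM mulfV ?gt_eqF // powRr1 //.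
  rewrite ler_wpM2l //; apply: ler1_powR => //; first by rewrite (ler_nat _ 1 3).
  by rewrite invr_le1 ?unitfE ?gt_eqF.
apply: ge_ereal_sup => _ [k _ <-]; rewrite lee_fin.
case: (i01 k) => [->|[-> _]]; rewrite ?mulr0 ?mulr1 ?mulr_ge0 //.
by rewrite ler_peMr // (ler_nat _ 1 3).
Qed.

Lemma mixedL_ge0 n (p : 'I_n -> \bar R) (g : Rn R n -> \bar R) :
  (forall x, 0 <= g x) -> 0 <= mixedL p g.
Proof. by move=> g0; apply: iter_ge0 => // q f; exact: Lp1_ge0. Qed.

Lemma mixedl_ge0 n (p : 'I_n -> \bar R) (g : Zn n -> \bar R) :
  (forall x, 0 <= g x) -> 0 <= mixedl p g.
Proof. by move=> g0; apply: iter_ge0 => // q f; exact: lp1_ge0. Qed.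

Lemma final_set n (T : Type) (I : 'I_n -> set T) (x : 'I_n -> T) :
  \1_[set x | forall i : 'I_n, (n <= i)%N -> I i (x i)] x = 1%R :> R.
Proof. by rewrite indicE mem_set // => i; rewrite leqNgt ltn_ord. Qed.

Lemma prod_full n (M : 'I_n -> R) :
  (\prod_(i < n | (i < n)%N) M i = \prod_(i < n) M i)%R.
Proof. by apply: eq_bigl => i; rewrite ltn_ord. Qed.

Lemma mixedL_box_up n (p : 'I_n -> \bar R) (g : Rn R n -> \bar R)
  (I : 'I_n -> set R) (L : 'I_n -> R) (K : R) :
  (forall i, 1 <= p i) -> (forall i, measurable (I i)) ->
  (forall i, mu (I i) = (L i)%:E) -> (0 <= K)%R ->
  (forall x, 0 <= g x) ->
  (forall x, g x <= (K * \1_[set x | forall i, I i (x i)] x)%:E) ->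
  mixedL p g <= (K * \prod_(i < n) (L i `^ inv_exp (p i)))%R%:E.
Proof.
move=> p1 mI muI K0 g0 gK.
have := @iter_box_up n R (@Lp1 R) p g I (fun i => (L i `^ inv_exp (p i))%R) K
  (fun q f h => Lp1_ge0 q f h) (fun i f h f0 fh => @Lp1_mono _ f h (p1 i) f0 fh)
  (fun i c c0 => @Lp1_box_up _ c _ _ (p1 i) c0 (mI i) (muI i))
  (fun i => powR_ge0 _ _) K0 g0 gK n (leqnn n) (fun=> 0%R).
by rewrite final_set mulr1 prod_full.
Qed.

Lemma mixedl_box_up n (p : 'I_n -> \bar R) (g : Zn n -> \bar R)
  (J : 'I_n -> set int) (a1 a2 a3 : 'I_n -> int) (K : R) :
  (forall i, 1 <= p i) ->
  (forall i k, J i k -> k = a1 i \/ k = a2 i \/ k = a3 i) -> (0 <= K)%R ->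
  (forall x, 0 <= g x) ->
  (forall x, g x <= (K * \1_[set x | forall i, J i (x i)] x)%:E) ->
  mixedl p g <= (K * \prod_(i < n) 3)%:E.
Proof.
move=> p1 hJ K0 g0 gK.
have := @iter_box_up n int (@lp1 R) p g J (fun i => 3%R) K
  (fun q f h => lp1_ge0 q f h) (fun i f h f0 fh => @lp1_mono _ f h (p1 i) f0 fh)
  (fun i c c0 => @lp1_box_up _ c _ _ _ _ (p1 i) c0 (hJ i))
  (fun i => ler0n _ 3) K0 g0 gK n (leqnn n) (fun=> 0%R).
by rewrite final_set mulr1 prod_full.
Qed.

Lemma vol_box_lo n (A : set (Rn R n)) (I : 'I_n -> set R) (L : 'I_n -> R) :
  (forall i, measurable (I i)) -> (forall i, mu (I i) = (L i)%:E) ->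
  (forall x, (forall i, I i (x i)) -> A x) ->
  (\prod_(i < n) L i)%:E <= vol A.
Proof.
move=> mI muI hA.
have L0 i : (0 <= L i)%R by rewrite -lee_fin -muI measure_ge0.
have := @iter_box_lo n R (@Lp1 R) (fun=> 1) (fun x => (\1_A x)%:E) I L 1%R
  (fun q f h => Lp1_ge0 q f h) (fun i f h f0 fh => @Lp1_mono _ f h (lexx _) f0 fh).
move=> /(_ _ L0 ler01).
have hb : forall (i : 'I_n) (c : R), (0 <= c)%R ->
    (c * L i)%:E <= Lp1 1 (fun t => (c * \1_(I i) t)%:E).
  move=> i c c0; rewrite (@Lp1_box_eq 1 c (L i) (I i)) //.
  by rewrite invr1 powRr1.
move=> /(_ hb) /(_ _) /(_ _) /(_ n (leqnn n) (fun=> 0%R)).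
rewrite final_set mulr1 mul1r prod_full; apply.
- by move=> x; rewrite lee_fin.
- move=> x; rewrite lee_fin mul1r indicE; case: (boolP (x \in _)) => //.
  by rewrite inE => /hA Ax; rewrite indicE mem_set.
Qed.
End Gen.

Section Geo.
Variable R : realType.
Notation mu := (@lebesgue_measure R).

Lemma mu_oo (a b : R) : (a <= b)%R -> (mu `]a, b[%classic = (b - a)%:E)%E.
Proof.
rewrite le_eqVlt => /orP[/eqP->|ab]; last by rewrite lebesgue_measure_itv /= lte_fin ab -EFinB.
by rewrite set_itv_ge ?measure0 ?subrr // bnd_simp ltxx.
Qed.

Lemma mu_co (a b : R) : (a <= b)%R -> (mu `[a, b[%classic = (b - a)%:E)%E.
Proof.
rewrite le_eqVlt => /orP[/eqP->|ab]; last by rewrite lebesgue_measure_itv /= lte_fin ab -EFinB.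
by rewrite set_itv_ge ?measure0 ?subrr // bnd_simp ltxx.
Qed.

Lemma cabs_real (k : R) : (0 <= k)%R -> cabs (k%:C)%C = k.
Proof.
move=> k0; rewrite /cabs /Normc.normc /=.
by rewrite expr0n /= addr0 sqrtr_sqr ger0_norm.
Qed.

Lemma ball_sub_box n (y : Rn R n) (r : R) x : 0 <= r -> eball y r x ->
  forall i, `]y i - r, y i + r[%classic (x i).
Proof.
rewrite /eball /= => r0 h i.
have : ((x i - y i) ^+ 2 < r ^+ 2)%R.
  apply: le_lt_trans h; rewrite (bigD1 i) //= lerDl.
  by apply: sumr_ge0 => j _; rewrite sqr_ge0.
move=> h2; rewrite in_itv /=.
by apply/andP; split; nra.
Qed.

Lemma box_sub_ball n (y : Rn R n) (r : R) x : 0 < r ->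
  (forall i, `]y i - r / n.+1%:R, y i + r / n.+1%:R[%classic (x i)) -> eball y r x.
Proof.
move=> r0 h; rewrite /eball /=.
set h0 := r / n.+1%:R.
have n0 : (0 < n.+1%:R :> R) by rewrite ltr0Sn.
have hh : h0 * n.+1%:R = r by rewrite /h0 mulfVK // gt_eqF.
have h00 : 0 < h0 by rewrite /h0 divr_gt0.
apply: (@le_lt_trans _ _ (\sum_(i < n) h0 ^+ 2)).
  apply: ler_sum => i _; have := h i => /=; rewrite in_itv /= -/h0 => /andP[a b].
  have e1 : 0 < h0 - (x i - y i) by lra.
  have e2 : 0 < h0 + (x i - y i) by lra.
  have := mulr_gt0 e1 e2; nra.
rewrite sumr_const card_ord -mulr_natr -hh.
have : (0 <= n%:R :> R) by [].
rewrite -natr1; nra.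
Qed.


Lemma indic_le (T : Type) (A B : set T) x : (A x -> B x) -> (\1_A x <= \1_B x :> R).
Proof.
move=> h; rewrite !indicE; case: (boolP (x \in A)) => //.
by rewrite inE => /h Bx; rewrite mem_set.
Qed.

Lemma indic_ge0' (T : Type) (A : set T) x : (0 <= \1_A x :> R).
Proof. by rewrite indicE. Qed.

Lemma indic_le1 (T : Type) (A : set T) x : (\1_A x <= 1 :> R).
Proof. by rewrite indicE; case: (_ \in _). Qed.

Lemma inv_exp1 : inv_exp (1%E : \bar R) = 1.
Proof. by rewrite /= invr1. Qed.

Lemma vol_ball_up n (y : Rn R n) r : 0 < r -> (vol (eball y r) <= ((2 * r) ^+ n)%:E)%E.
Proof.
move=> r0.
have := @mixedL_box_up R n (fun=> 1%E) (fun x => (\1_(eball y r) x)%:E)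
  (fun i => `]y i - r, y i + r[%classic) (fun=> 2 * r) 1.
have -> : \prod_(i < n) (2 * r) `^ inv_exp ((fun=> 1%E : \bar R) i) = (2 * r) ^+ n.
  rewrite (eq_bigr (fun=> 2 * r)) ?prodr_const ?card_ord // => i _.
  by rewrite inv_exp1 powRr1 // mulr_ge0 // ltW.
rewrite mul1r; apply => //; last first.
  move=> x; rewrite lee_fin mul1r; apply: indic_le => h i.
  exact: ball_sub_box (ltW r0) h i.
by move=> i; rewrite mu_oo; [congr EFin; ring | lra].
Qed.

Lemma vol_ball_lo n (y : Rn R n) r : 0 < r ->
  (((2 * (r / n.+1%:R)) ^+ n)%:E <= vol (eball y r))%E.
Proof.
move=> r0.
have h0 : 0 < r / n.+1%:R by rewrite divr_gt0 // ltr0Sn.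
have := @vol_box_lo R n (eball y r) (fun i => `]y i - r / n.+1%:R, y i + r / n.+1%:R[%classic)
  (fun=> 2 * (r / n.+1%:R)).
rewrite prodr_const card_ord; apply => //.
- move=> i; rewrite mu_oo; first by congr EFin; ring.
  by rewrite lerD2l gt0_cp // ltW.
- by move=> x h; apply: box_sub_ball.
Qed.

End Geo.

Section Real.
Variable R : realType.

Lemma powRD' (x a b : R) : 0 < x -> x `^ (a + b) = x `^ a * x `^ b.
Proof. by move=> x0; rewrite powRD //; apply/implyP => _; rewrite gt_eqF. Qed.

Lemma powR_mono (x y u : R) : 0 <= x -> x <= y -> 0 <= u -> x `^ u <= y `^ u.
Proof. by move=> x0 xy u0; apply: ge0_ler_powR => //; apply: le_trans xy. Qed.

Lemma powR_anti (x y u : R) : 0 < x -> x <= y -> u <= 0 -> y `^ u <= x `^ u.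
Proof.
move=> x0 xy u0; have [v -> v0] : exists2 v, u = - v & 0 <= v.
  by exists (- u); rewrite ?opprK // oppr_ge0.
rewrite !powRN.
have y0 : 0 < y by apply: lt_le_trans xy.
rewrite lef_pV2 ?posrE ?powR_gt0 //.
by apply: powR_mono => //; exact: ltW.
Qed.

Lemma key_ineq (N a b c r r0 l e h : R) : 0 < N -> 0 < l -> 0 < r -> 0 < r0 ->
  0 <= b -> b <= c -> c <= a -> e = c - a - b ->
  h = (if r <= r0 then r else r0) ->
  (l * r) `^ (N * e) * (2 * h) `^ (N * a) * (2 * (r + r0)) `^ (N * b) <=
  (l `^ (N * e) * 2 `^ (N * a) * 4 `^ (N * b)) * r0 `^ (N * c).
Proof.
move=> N0 l0 r0' r00 b0 bc ca he hh.
have Nb : 0 <= N * b by rewrite mulr_ge0 // ltW.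
have r0p := ltW r00; have rp := ltW r0'; have lp := ltW l0.
have hp : 0 <= h by rewrite hh; case: ifP.
rewrite !powRM ?mulr_ge0 ?addr_ge0 //.
rewrite hh; case: ifP => rr0.
- apply: (@le_trans _ _ (l `^ (N * e) * r `^ (N * e) * (2 `^ (N * a) * r `^ (N * a)) *
      (4 `^ (N * b) * r0 `^ (N * b)))).
    rewrite ler_wpM2l ?mulr_ge0 ?powR_ge0 //.
    rewrite -[X in X <= _]powRM ?addr_ge0 // -powRM //; apply: powR_mono => //.
      by rewrite mulr_ge0 // addr_ge0.
    lra.
  have -> : l `^ (N * e) * r `^ (N * e) * (2 `^ (N * a) * r `^ (N * a)) *
      (4 `^ (N * b) * r0 `^ (N * b)) =
      (l `^ (N * e) * 2 `^ (N * a) * 4 `^ (N * b)) * ((r `^ (N * e) * r `^ (N * a)) * r0 `^ (N * b)).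
    by ring.
  rewrite ler_wpM2l ?mulr_ge0 ?powR_ge0 // -powRD' //.
  have -> : N * c = N * e + N * a + N * b by rewrite he; ring.
  rewrite [in X in _ <= X]powRD' // ler_wpM2r ?powR_ge0 //.
  apply: powR_mono; [exact: rp | by rewrite rr0 | rewrite he].
  have -> : N * (c - a - b) + N * a = N * (c - b) by ring.
  by rewrite mulr_ge0 ?subr_ge0 // ltW.
- have r0r : r0 <= r by move/negbT: rr0; rewrite -ltNge => /ltW.
  apply: (@le_trans _ _ (l `^ (N * e) * r `^ (N * e) * (2 `^ (N * a) * r0 `^ (N * a)) *
      (4 `^ (N * b) * r `^ (N * b)))).
    rewrite ler_wpM2l ?mulr_ge0 ?powR_ge0 //.
    rewrite -[X in X <= _]powRM ?addr_ge0 // -powRM //; apply: powR_mono => //.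
      by rewrite mulr_ge0 // addr_ge0.
    lra.
  have -> : l `^ (N * e) * r `^ (N * e) * (2 `^ (N * a) * r0 `^ (N * a)) *
      (4 `^ (N * b) * r `^ (N * b)) =
      (l `^ (N * e) * 2 `^ (N * a) * 4 `^ (N * b)) * ((r `^ (N * e) * r `^ (N * b)) * r0 `^ (N * a)).
    by ring.
  rewrite ler_wpM2l ?mulr_ge0 ?powR_ge0 // -powRD' //.
  have -> : N * c = (N * e + N * b) + N * a by rewrite he; ring.
  rewrite [in X in _ <= X]powRD' // ler_wpM2r ?powR_ge0 //.
  apply: powR_anti; [exact: r00 | exact: r0r | rewrite he].
  have -> : N * (c - a - b) + N * b = N * (c - a) by ring.
  by rewrite pmulr_rle0 // subr_le0.
Qed.
End Real.

Section Morrey.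
Variable R : realType.
Notation mu := (@lebesgue_measure R).

Lemma prod_powR n (x : R) (f : 'I_n -> R) : 0 < x ->
  \prod_(i < n) x `^ f i = x `^ (\sum_(i < n) f i).
Proof.
move=> x0; elim/big_ind2: _ => //; first by rewrite powRr0.
by move=> a u b v -> ->; rewrite powRD'.
Qed.

Lemma cabs_chi n (A : set (Rn R n)) x : cabs (chiC A x) = \1_A x.
Proof. by rewrite /chiC cabs_real // indic_ge0'. Qed.

Definition bigbox n (x0 : Rn R n) (h : R) :=
  [set y : Rn R n | forall i, `]x0 i - h, x0 i + h[%classic (y i)].
Arguments bigbox {n}.

Lemma G_bound n (p : 'I_n -> \bar R) (x0 y : Rn R n) (r0 r h : R) :
  (forall i, (1 <= p i)%E) -> 0 < r0 -> 0 < r -> (h = r \/ h = r0) ->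
  (normL_on p (chiC (eball x0 r0)) (eball y r) <=
   ((2 * h) `^ (\sum_(i < n) inv_exp (p i)) * \1_(bigbox x0 (r + r0)) y)%:E)%E.
Proof.
move=> p1 r00 r0' hh.
have h0 : 0 < h by case: hh => ->.
rewrite /normL_on.
have g0 : forall x, (0 <= (cabs (chiC (eball x0 r0) x) * \1_(eball y r) x)%:E)%E.
  by move=> x; rewrite cabs_chi lee_fin mulr_ge0 ?indic_ge0'.
pose c := if pselect (h = r) then y else x0.
have hc : forall x, eball x0 r0 x -> eball y r x -> eball c h x.
  rewrite /c; case: pselect => [hr|hr] x a b /=; first by rewrite hr.
  by case: hh => // hh; rewrite hh.
case: (pselect (bigbox x0 (r + r0) y)) => yb.
- rewrite (_ : \1_(bigbox x0 (r + r0)) y = 1); last by rewrite indicE mem_set.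
  rewrite mulr1 -prod_powR ?mulr_gt0 //.
  have := @mixedL_box_up R n p _ (fun i => `]c i - h, c i + h[%classic) (fun=> 2 * h) 1
    p1 (fun i => measurable_itv _).
  rewrite mul1r; apply => //.
  + move=> i; rewrite mu_oo; first by congr EFin; ring.
    by rewrite lerD2l gt0_cp // ltW.
  + move=> x; rewrite cabs_chi lee_fin mul1r.
    case: (pselect (eball x0 r0 x /\ eball y r x)) => [[a b]|nab].
      rewrite [X in (_ <= X)%R]indicE mem_set; last first.
        by move=> i; apply: ball_sub_box (ltW h0) (hc _ a b) i.
      by rewrite mulr_ile1 ?indic_ge0' ?indic_le1.
    suff -> : (\1_(eball x0 r0) x * \1_(eball y r) x = 0 :> R) by rewrite indic_ge0'.
    rewrite !indicE; case: (boolP (x \in eball x0 r0)); case: (boolP (x \in eball y r));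
      rewrite ?mulr0 ?mul0r // !inE => b a; by exfalso; apply: nab.
- rewrite (_ : \1_(bigbox x0 (r + r0)) y = 0); last by rewrite indicE memNset.
  rewrite mulr0.
  have := @mixedL_box_up R n p _ (fun i => `]c i - h, c i + h[%classic) (fun=> 2 * h) 0
    p1 (fun i => measurable_itv _).
  rewrite mul0r; apply => //.
  + move=> i; rewrite mu_oo; first by congr EFin; ring.
    by rewrite lerD2l gt0_cp // ltW.
  + move=> x; rewrite cabs_chi lee_fin mul0r.
    suff -> : (\1_(eball x0 r0) x * \1_(eball y r) x = 0 :> R) by [].
    rewrite !indicE; case: (boolP (x \in eball x0 r0)); case: (boolP (x \in eball y r));
      rewrite ?mulr0 ?mul0r // !inE => b a; exfalso; apply: yb => i /=.
    have := @ball_sub_box R n x0 r0 x (ltW r00) a i; have := @ball_sub_box R n y r x (ltW r0') b i.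
    rewrite in_itv /= => /andP[b1 b2]; rewrite in_itv /= => /andP[a1 a2].
    move: b1 b2 a1 a2; rewrite ?bnd_simp => b1 b2 a1 a2.
    by apply/andP; split; lra.
Qed.

Lemma pow_vol n (y : Rn R n) r e : 0 < r -> e <= 0 ->
  (poweR (vol (eball y r)) e <= (((2 * (r / n.+1%:R)) ^+ n) `^ e)%:E)%E.
Proof.
move=> r0 e0; have lo := @vol_ball_lo R n y r r0; have up := @vol_ball_up R n y r r0.
have V0 : 0 < (2 * (r / n.+1%:R)) ^+ n by rewrite exprn_gt0 // mulr_gt0 // divr_gt0 // ltr0Sn.
move: lo up; case: (vol (eball y r)) => [v| |] lo up.
- by rewrite poweR_EFin lee_fin; apply: powR_anti => //; rewrite -lee_fin.
- by move: up; rewrite leye_eq.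
- by move: lo; rewrite leeNy_eq.
Qed.

Lemma morrey_r n (p s : 'I_n -> \bar R) (x0 : Rn R n) (r0 r h e : R) :
  (forall i, (1 <= p i)%E) -> (forall i, (1 <= s i)%E) -> 0 < r0 -> 0 < r ->
  (h = r \/ h = r0) -> e <= 0 ->
  (mixedL s (fun y => (poweR (vol (eball y r)) e *
      normL_on p (chiC (eball x0 r0)) (eball y r))%E) <=
   ((((2 * (r / n.+1%:R)) ^+ n) `^ e) * (2 * h) `^ (\sum_(i < n) inv_exp (p i)) *
     (2 * (r + r0)) `^ (\sum_(i < n) inv_exp (s i)))%:E)%E.
Proof.
move=> p1 s1 r00 r0' hh e0.
have h0 : 0 < h by case: hh => ->.
set K := (((2 * (r / n.+1%:R)) ^+ n) `^ e) * (2 * h) `^ (\sum_(i < n) inv_exp (p i)).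
have K0 : 0 <= K by rewrite mulr_ge0 ?powR_ge0.
have := @mixedL_box_up R n s _ (fun i => `]x0 i - (r + r0), x0 i + (r + r0)[%classic)
    (fun=> 2 * (r + r0)) K s1 (fun i => measurable_itv _).
rewrite -prod_powR ?mulr_gt0 ?addr_gt0 //; apply => //.
- move=> i; rewrite mu_oo; first by congr EFin; ring.
  by rewrite lerD2l gt0_cp ?addr_gt0 // ltW.
- move=> y; apply: mule_ge0; first exact: poweR_ge0.
  apply: mixedL_ge0 => x; rewrite lee_fin mulr_ge0 // ?indic_ge0' //.
  by rewrite cabs_chi indic_ge0'.
- move=> y; rewrite /K -mulrA EFinM; apply: lee_pmul.
  + exact: poweR_ge0.
  + apply: mixedL_ge0 => x; rewrite lee_fin mulr_ge0 // ?indic_ge0' //.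
    by rewrite cabs_chi indic_ge0'.
  + exact: pow_vol.
  + exact: (@G_bound n p x0 y r0 r h p1 r00 r0' hh).
Qed.
End Morrey.

Section MorreyFinal.
Variable R : realType.

Lemma morrey_final n (p s : 'I_n -> \bar R) (alpha : \bar R) (x0 : Rn R n) (r0 : R) :
  (0 < n)%N ->
  (forall i, (1 <= p i)%E) -> (forall i, (1 <= s i)%E) ->
  0 <= (\sum_(i < n) inv_exp (s i)) / n%:R ->
  (\sum_(i < n) inv_exp (s i)) / n%:R <= inv_exp alpha ->
  inv_exp alpha <= (\sum_(i < n) inv_exp (p i)) / n%:R ->
  0 < r0 ->
  forall N a b c e l, N = n%:R ->
  a = (\sum_(i < n) inv_exp (p i)) / n%:R ->
  b = (\sum_(i < n) inv_exp (s i)) / n%:R ->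
  c = inv_exp alpha -> e = c - a - b -> l = 2 / n.+1%:R ->
  (morrey_norm p s alpha (chiC (eball x0 r0)) <=
   ((l `^ (N * e) * 2 `^ (N * a) * 4 `^ (N * b)) * r0 `^ (N * c))%:E)%E.
Proof.
move=> n0 p1 s1 b0 bc ca r00 N a b c e l hN ha hb hc he hl.
rewrite -ha -hb -hc in b0 bc ca.
have N0 : 0 < N by rewrite hN ltr0n.
have l0 : 0 < l by rewrite hl divr_gt0 // ltr0Sn.
have e0 : e <= 0 by rewrite he; lra.
rewrite /morrey_norm /= -ha -hb -hc -he; apply: ge_ereal_sup => _ [r /= r0' <-].
pose h := if r <= r0 then r else r0.
have hh : h = r \/ h = r0 by rewrite /h; case: ifP; [left|right].
apply: le_trans (@morrey_r R n p s x0 r0 r h e p1 s1 r00 r0' hh e0) _.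
rewrite lee_fin.
have -> : (2 * (r / n.+1%:R)) ^+ n = (l * r) `^ N.
  by rewrite hN powR_mulrn ?mulr_ge0 ?ltW // hl; congr (_ ^+ _); rewrite mulrA mulrAC.
rewrite -powRrM.
have -> : \sum_(i < n) inv_exp (p i) = N * a by rewrite ha hN mulrC divfK // -hN gt_eqF.
have -> : \sum_(i < n) inv_exp (s i) = N * b by rewrite hb hN mulrC divfK // -hN gt_eqF.
by apply: key_ineq.
Qed.
End MorreyFinal.

Section Meas.
Variable R : realType.
Variable n : nat.
Local Notation MT := (g_sigma_algebraType (@boxes R n)).

Lemma coord_meas (i : 'I_n) : measurable_fun [set: MT] (fun x : MT => (x : Rn R n) i).
Proof.
apply: (@measurability _ _ MT R setT _ (@RGenOpens.G R)).
  exact: RGenOpens.measurableE.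
move=> _ [_ [a [b ->]] <-].
rewrite setTI.
have -> : (fun x : MT => (x : Rn R n) i) @^-1` `]a, b[%classic =
    \bigcup_(m in [set: nat]) [set x : Rn R n | forall j : 'I_n,
      (if j == i then a else - m%:R) < x j < (if j == i then b else m%:R)].
  apply/seteqP; split => x /=.
    rewrite in_itv /= => /andP[ax xb].
    have s0 : 0 <= \sum_(j < n) `|x j| by apply: sumr_ge0 => j _.
    exists (Num.bound (\sum_(j < n) `|x j|)) => // j.
    case: eqP => [->|_]; first by rewrite ax xb.
    have := archi_boundP s0; set m := (Num.bound _)%:R => hm.
    have : `|x j| < m.
      apply: le_lt_trans hm; rewrite (bigD1 j) //= lerDl.
      by apply: sumr_ge0.
    by rewrite ltr_norml.
  move=> [m _ h]; have := h i; rewrite eqxx => hi.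
  by rewrite in_itv /=.
apply: bigcupT_measurable => m; apply: sub_sigma_algebra.
exists (fun j => if j == i then a else - m%:R); exists (fun j => if j == i then b else m%:R).
by [].
Qed.

Lemma ball_borel (y : Rn R n) (r : R) : borel_Rn (eball y r).
Proof.
have mf : measurable_fun [set: MT] (fun x : MT => \sum_(i < n) ((x : Rn R n) i - y i) ^+ 2).
  apply: measurable_sum => i; apply: measurable_funX.
  by apply: measurable_funB; [exact: coord_meas | exact: measurable_cst].
have := mf measurableT `]-oo, r ^+ 2[%classic (measurable_itv _).
rewrite setTI.
have -> : (fun x : MT => \sum_(i < n) ((x : Rn R n) i - y i) ^+ 2) @^-1` `]-oo, r ^+ 2[%classic
  = eball y r.
  by apply/seteqP; split => x /=; rewrite in_itv /=.
by [].
Qed.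

Lemma borel_setT : borel_Rn [set: Rn R n].
Proof. exact: (@measurableT _ MT). Qed.

Lemma borel_set0 : borel_Rn (set0 : set (Rn R n)).
Proof. exact: (@measurable0 _ MT). Qed.

Lemma borel_setC (A : set (Rn R n)) : borel_Rn A -> borel_Rn (~` A).
Proof. exact: (@measurableC _ MT). Qed.

Lemma meas_indic (A : set (Rn R n)) (k : R) : borel_Rn A ->
  measurable_Rn (fun x => k * \1_A x).
Proof.
move=> mA B _.
have -> : (fun x => k * \1_A x) @^-1` B =
  if pselect (B k) then (if pselect (B 0) then setT else A)
  else (if pselect (B 0) then ~` A else set0).
  apply/seteqP; split => x /=; case: (pselect (A x)) => xA;
    rewrite indicE ?(mem_set xA) ?(memNset xA) ?mulr1 ?mulr0;
    case: (pselect (B k)) => bk; case: (pselect (B 0)) => b0 //=; tauto.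
case: (pselect (B k)) => bk; case: (pselect (B 0)) => b0 /=;
  first [exact: borel_setT | exact: mA | (apply: borel_setC; exact: mA) | exact: borel_set0].
Qed.
End Meas.

Section HPart.
Variable R : realType.
Notation mu := (@lebesgue_measure R).

Lemma conj_exp_ge1 (x : \bar R) : (1 <= x)%E -> (1 <= conj_exp x)%E.
Proof.
case: x => [r| |] //= r1.
case: eqP => [_|/eqP rn1]; first exact: leey.
have r1' : 1 < r by rewrite lt_neqAle eq_sym rn1 -lee_fin.
rewrite lee_fin ler_pdivlMr ?subr_gt0 // mul1r; lra.
Qed.

Lemma cM (a b : R) : ((a%:C * b%:C)%C = (a * b)%:C%C :> R[i]).
Proof. by rewrite -rmorphM. Qed.

Lemma mixedL_eq0 n (p : 'I_n -> \bar R) (g : Rn R n -> \bar R) :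
  (forall i, (1 <= p i)%E) -> (forall x, g x = 0%E) -> mixedL p g = 0%E.
Proof.
move=> p1 g0; apply/eqP; rewrite eq_le mixedL_ge0 ?andbT; last by move=> x; rewrite g0.
have := @mixedL_box_up R n p g (fun=> `]0, 1[%classic) (fun=> 1) 0 p1
    (fun i => measurable_itv _).
rewrite mul0r; apply => //.
- by move=> i; rewrite mu_oo // subr0.
- by move=> x; rewrite g0.
- by move=> x; rewrite g0 mul0r.
Qed.

Lemma cube_int (z xi : R) (k : int) :
  k%:~R <= xi < (k + 1)%:~R -> z - 1 < xi < z + 1 ->
  k = Num.floor z - 1 \/ k = Num.floor z \/ k = Num.floor z + 1.
Proof.
move=> /andP[k1 k2] /andP[z1 z2].
have f1 := floor_le z.
have f2 : (k - 1 <= Num.floor z)%R.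
  rewrite floor_ge_int rmorphB /=; lra.
have f3 : (Num.floor z < k + 2)%R.
  rewrite -(ltr_int R) rmorphD /=.
  have : (k + 1)%:~R = k%:~R + 1 :> R by rewrite rmorphD.
  move: k2; rewrite rmorphD /= => k2 _; lra.
lia.
Qed.

Definition f0 n (z : Rn R n) (D : R) : Rn R n -> R[i] :=
  fun x => ((D^-1)%:C * chiC (eball z 1) x)%C.
Arguments f0 {n}.

Lemma f0E n (z : Rn R n) D x : f0 z D x = ((D^-1 * \1_(eball z 1) x)%:C)%C.
Proof. by rewrite /f0 /chiC cM. Qed.

Lemma cabs_f0 n (z : Rn R n) D x : 0 < D -> cabs (f0 z D x) = D^-1 * \1_(eball z 1) x.
Proof. by move=> D0; rewrite f0E cabs_real // mulr_ge0 ?invr_ge0 ?indic_ge0' // ltW. Qed.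

Lemma L1loc_f0 n (z : Rn R n) D : 0 < D -> L1loc (f0 z D).
Proof.
move=> D0; split.
- rewrite (_ : (fun x => complex.Re (f0 z D x)) = (fun x => D^-1 * \1_(eball z 1) x)).
    by apply: meas_indic; exact: ball_borel.
  by apply/funext => x; rewrite f0E.
- rewrite (_ : (fun x => complex.Im (f0 z D x)) = (fun x => 0 * \1_(eball z 1) x)).
    by apply: meas_indic; exact: ball_borel.
  by apply/funext => x; rewrite f0E mul0r.
- move=> rho rho0; rewrite /normL_on.
  apply: le_lt_trans (ltry ((D^-1 * \prod_(i < n) (2 * rho) `^ inv_exp (1%E : \bar R)))).
  apply: (@mixedL_box_up R n (fun=> 1%E) _ (fun i => `]0 - rho, 0 + rho[%classic) (fun=> 2 * rho)).
  + by [].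
  + by move=> i; exact: measurable_itv.
  + move=> i; rewrite mu_oo; first by congr EFin; ring.
    by rewrite lerD2l gt0_cp // ltW.
  + by rewrite invr_ge0 ltW.
  + by move=> x; rewrite cabs_f0 // lee_fin !mulr_ge0 ?invr_ge0 ?indic_ge0' ?ltW.
  + move=> x; rewrite cabs_f0 // lee_fin -mulrA; apply: ler_wpM2l; first by rewrite invr_ge0 ltW.
    apply: (@le_trans _ _ (\1_(eball (fun=> 0) rho) x)).
      by rewrite -[X in _ <= X]mul1r ler_wpM2r ?indic_ge0' ?indic_le1.
    apply: indic_le => h i; exact: (@ball_sub_box R n (fun=> 0) rho x (ltW rho0) h i).
Qed.

Lemma amalg_f0 n (q t : 'I_n -> \bar R) (z : Rn R n) :
  (forall i, (1 <= q i)%E) -> (forall i, (1 <= t i)%E) ->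
  (amalgam_norm q t (f0 z (3 ^+ n)) <= 1)%E.
Proof.
move=> q1 t1; set D : R := 3 ^+ n.
have D0 : 0 < D by rewrite exprn_gt0.
have Di0 : 0 <= D^-1 by rewrite invr_ge0 ltW.
pose J i := [set m : int | m = Num.floor (z i) - 1 \/ m = Num.floor (z i) \/ m = Num.floor (z i) + 1].
have g0 : forall (k : Zn n) x, (0 <= (cabs (f0 z D x) * \1_(cube k) x)%:E)%E.
  by move=> k x; rewrite cabs_f0 // lee_fin !mulr_ge0 ?indic_ge0'.
have hk : forall k : Zn n, (normL_on q (f0 z D) (cube k) <=
    (D^-1 * \1_[set k | forall i, J i (k i)] k)%:E)%E.
  move=> k; rewrite /normL_on.
  pose I := fun i => `[((k i)%:~R : R), (k i)%:~R + 1[%classic.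
  have mI : forall i, measurable (I i) by move=> i; exact: measurable_itv.
  have muI : forall i, mu (I i) = (1 : R)%:E.
    by move=> i; rewrite /I mu_co ?lerDl // addrAC subrr add0r.
  have hcube : forall x, cube k x -> forall i, I i (x i).
    by move=> x h i; rewrite /I /= in_itv /=; exact: h.
  case: (pselect (forall i, J i (k i))) => kJ.
  - rewrite (_ : \1_[set k | forall i, J i (k i)] k = 1); last by rewrite indicE mem_set.
    have := @mixedL_box_up R n q _ _ (fun=> 1) (D^-1) q1 mI muI Di0 (g0 k).
    rewrite powR1 big1 // mulr1; apply => x.
    rewrite cabs_f0 // lee_fin -mulrA; apply: ler_wpM2l => //.
    apply: (@le_trans _ _ (\1_(cube k) x)).
      by rewrite -[X in _ <= X]mul1r ler_wpM2r ?indic_ge0' ?indic_le1.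
    by apply: indic_le => h; exact: hcube.
  - rewrite (_ : \1_[set k | forall i, J i (k i)] k = 0); last by rewrite indicE memNset.
    have := @mixedL_box_up R n q _ _ (fun=> 1) 0 q1 mI muI (lexx _) (g0 k).
    rewrite !mul0r mulr0; apply => x.
    rewrite cabs_f0 // mul0r lee_fin -mulrA.
    suff -> : \1_(eball z 1) x * \1_(cube k) x = 0 :> R by rewrite mulr0.
    rewrite !indicE; case: (boolP (x \in eball z 1)); case: (boolP (x \in cube k));
      rewrite ?mulr0 ?mul0r // !inE => b a; exfalso; apply: kJ => i.
    have := @ball_sub_box R n z 1 x ler01 a i; rewrite /= in_itv /= => hz.
    apply: (@cube_int (z i) (x i)) => //.
    by have := b i; rewrite rmorphD.
have := @mixedl_box_up R n t _ J (fun i => Num.floor (z i) - 1) (fun i => Num.floor (z i))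
  (fun i => Num.floor (z i) + 1) (D^-1) t1 (fun i k h => h) Di0.
rewrite prodr_const card_ord mulVf ?gt_eqF //; apply => //.
by move=> k; apply: mixedL_ge0 => x; exact: g0.
Qed.
End HPart.

Section HFinal.
Variable R : realType.

Lemma indic_eq (T : Type) (A B : set T) x y : (A x <-> B y) -> \1_A x = \1_B y :> R.
Proof.
move=> h; rewrite !indicE; case: (pselect (A x)) => ax.
  by rewrite !mem_set //; apply/h.
by rewrite !memNset // => /h.
Qed.

Lemma cabs0 : cabs (0 : R[i]) = 0.
Proof. by have := @cabs_real R 0 (lexx _). Qed.

Lemma cabs_ge0 (z : R[i]) : 0 <= cabs z.
Proof. by rewrite /cabs; case: z => a b /=; rewrite sqrtr_ge0. Qed.

Lemma ball_scale n (x0 x : Rn R n) (r0 : R) : 0 < r0 ->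
  eball (fun i => x0 i / r0) 1 (fun i => x i / r0) <-> eball x0 r0 x.
Proof.
move=> r00; rewrite /eball /=.
rewrite (eq_bigr (fun i => (x i - x0 i) ^+ 2 / r0 ^+ 2)); last first.
  by move=> i _; rewrite -mulrBl exprMn exprVn.
rewrite -mulr_suml expr1n ltr_pdivrMr ?exprn_gt0 // mul1r.
by [].
Qed.

Lemma H_final n (p s : 'I_n -> \bar R) (alpha : \bar R) (x0 : Rn R n) (r0 : R) :
  (forall i, (1 <= p i)%E) -> (forall i, (1 <= s i)%E) -> 0 < r0 ->
  (H_norm (fun i => conj_exp (p i)) (fun i => conj_exp (s i))
         (conj_exp alpha) (chiC (eball x0 r0))
   <= ((3 ^+ n) * r0 `^ (n%:R * inv_exp (conj_exp alpha)))%:E)%E.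
Proof.
move=> p1 s1 r00.
set q := fun i => conj_exp (p i); set t := fun i => conj_exp (s i).
have q1 : forall i, (1 <= q i)%E by move=> i; exact: conj_exp_ge1.
have t1 : forall i, (1 <= t i)%E by move=> i; exact: conj_exp_ge1.
set beta := conj_exp alpha; set N : R := n%:R; set D : R := 3 ^+ n.
set g := inv_exp beta.
have D0 : 0 < D by rewrite exprn_gt0.
set z := fun i => x0 i / r0.
pose c := fun j : nat => if j == 0%N then ((r0 `^ (N * g) * D)%:C)%C else 0.
pose rr := fun _ : nat => r0.
pose fs := fun _ : nat => @f0 R n z D.
have c00 : 0 <= r0 `^ (N * g) * D by rewrite mulr_ge0 ?powR_ge0 // ltW.
have Hser : (\sum_(j <oo) (cabs (c j))%:E = (r0 `^ (N * g) * D)%:E)%E.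
  rewrite (@nneseries_split R _ 0 1); last by move=> k _; rewrite lee_fin cabs_ge0.
  rewrite add0n big_nat1 eseries0 ?adde0 //; first by congr EFin; apply: cabs_real.
  by move=> i i1 _; rewrite /c; case: eqP => [i0|_]; [move: i1; rewrite i0 | rewrite cabs0].
have Hid : forall x, (c 0%N * St beta (rr 0%N) (fs 0%N) x)%C = chiC (eball x0 r0) x.
  move=> x; rewrite /c /= /St /rr /fs f0E /chiC !cM; congr (_%:C)%C.
  rewrite (@indic_eq _ (eball z 1) (eball x0 r0) _ x); last exact: ball_scale.
  rewrite powRN; field; rewrite ?gt_eqF ?powR_gt0 //.
apply: (le_trans (@ereal_inf_lbound _ _ (\sum_(j <oo) (cabs (c j))%:E)%E _)).
  exists c, rr, fs; split => //; split.
  - by [].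
  - move=> j; split; first exact: L1loc_f0.
    by apply: le_lt_trans (@amalg_f0 R n q t z q1 t1) _; rewrite ltry.
  - by move=> j; exact: amalg_f0.
  - by rewrite Hser ltry.
  - move=> rho rho0; apply: cvg_near_cst; exists 1%N => // N' /= N1.
    apply: mixedL_eq0 => // x.
    have -> : (\sum_(j < N') c j * St beta (rr j) (fs j) x)%R = chiC (eball x0 r0) x.
      case: N' N1 => // N'' _; rewrite big_ord_recl big1 ?addr0 //.
      by move=> j _; rewrite /c /= mul0r.
    by rewrite subrr cabs0 mul0r.
by rewrite Hser lee_fin mulrC.
Qed.
End HFinal.

Theorem proposition7p1 (R : realType) (n : nat) (p s : 'I_n -> \bar R)
  (alpha : \bar R) :
  (0 < n)%N ->
  (forall i, (1 <= p i)%E) -> (forall i, (1 <= s i)%E) ->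
  (0 < alpha)%E ->
  0 <= (\sum_(i < n) inv_exp (s i)) / n%:R ->
  (\sum_(i < n) inv_exp (s i)) / n%:R <= inv_exp alpha ->
  inv_exp alpha <= (\sum_(i < n) inv_exp (p i)) / n%:R ->
  (\sum_(i < n) inv_exp (p i)) / n%:R < 1 ->
  exists C : R, 0 < C /\
    forall (x0 : Rn R n) (r0 : R), 0 < r0 ->
      (morrey_norm p s alpha (chiC (eball x0 r0))
         <= C%:E * (r0 `^ (n%:R * inv_exp alpha))%:E)%E /\
      (H_norm (fun i => conj_exp (p i)) (fun i => conj_exp (s i))
         (conj_exp alpha) (chiC (eball x0 r0))
         <= C%:E * (r0 `^ (n%:R * inv_exp (conj_exp alpha)))%:E)%E.
Proof.
move=> n0 p1 s1 al0 b0 bc ca a1.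
pose N : R := n%:R.
pose a := (\sum_(i < n) inv_exp (p i)) / n%:R.
pose b := (\sum_(i < n) inv_exp (s i)) / n%:R.
pose c := inv_exp alpha.
pose e := c - a - b.
pose l : R := 2 / n.+1%:R.
pose Cm := l `^ (N * e) * 2 `^ (N * a) * 4 `^ (N * b).
have Cm0 : 0 <= Cm by rewrite !mulr_ge0 ?powR_ge0.
have D0 : 0 < 3 ^+ n :> R by rewrite exprn_gt0.
exists (Cm + 3 ^+ n); split; first by rewrite ltr_wpDl.
move=> x0 r0 r00; split.
- apply: le_trans (@morrey_final R n p s alpha x0 r0 n0 p1 s1 b0 bc ca r00
     N a b c e l erefl erefl erefl erefl erefl erefl) _.
  rewrite -EFinM lee_fin ler_wpM2r ?powR_ge0 //.
  by rewrite lerDl ltW.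
- apply: le_trans (@H_final R n p s alpha x0 r0 p1 s1 r00) _.
  rewrite -EFinM lee_fin ler_wpM2r ?powR_ge0 //.
  by rewrite lerDr.
Qed.
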